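(* There is a function $f:\mathbb{N}\to\mathbb{N}$ with the following property. Let $m$ be a positive integer and let $G=QH$ be a finite group, where $Q$ is a normal nilpotent subgroup, $H$ is a subgroup, $\gcd(|Q|,|H|)=1$, and $|Q:C_Q(x)|\le m$ for all $x\in H$. Then $|[Q,H]|\le f(m)$.
   Context: $[Q,H]$ denotes the subgroup generated by all commutators $[q,h]$ with $q\in Q$, $h\in H$. *)

(* Defs.v *)
From mathcomp Require Import all_boot all_fingroup all_solvable.

(* Main.v *)
Require Import Defs.
From mathcomp Require Import all_boot all_fingroup all_solvable.
From mathcomp Require Import all_algebra zify.

Set Implicit Arguments.
Unset Strict Implicit.
Unset Printing Implicit Defensive.
Local Open Scope group_scope.



Lemma idx_restr (gT : finGroupType) (A B K : {group gT}) :
  A \subset B -> #|A : K| <= #|B : K|.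
Proof.
move=> sAB.
have eI : A :&: K = A :&: (B :&: K) by rewrite setIA (setIidPl sAB).
have h1 := LagrangeI A K; have h2 := LagrangeI B K.
have h3 := mul_cardG A [group of B :&: K].
have h4 : #|(A * (B :&: K))%g| <= #|B|.
  by apply: subset_leq_card; rewrite mul_subG ?subsetIl.
rewrite /= -eI in h3.
have p1 : 0 < #|A :&: K| := cardG_gt0 [group of A :&: K].
have p2 : 0 < #|B :&: K| := cardG_gt0 [group of B :&: K].
have h5 : #|A| * #|B :&: K| <= #|B| * #|A :&: K|.
  by rewrite h3 leq_mul2r h4 orbT.
rewrite -h1 -h2 in h5.
have p3 : 0 < #|A :&: K| * #|B :&: K| by rewrite muln_gt0 p1 p2.
rewrite -(leq_pmul2r p3).
move: h5; rewrite !mulnA. nia.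
Qed.

Lemma card_gen_abel (gT : finGroupType) (e : nat) : forall n (A : {set gT}),
  #|A| = n -> abelian <<A>> -> (forall a, a \in A -> #[a] <= e) ->
  #|<<A>>| <= e ^ n.
Proof.
elim=> [|n IH] A cA abA oA.
  by move/eqP: cA; rewrite cards_eq0 => /eqP ->; rewrite gen0 cards1.
have [a Aa] : exists a, a \in A.
  by apply/set0Pn; rewrite -cards_eq0 cA.
set B := A :\ a.
have cB : #|B| = n by move: cA; rewrite (cardsD1 a) Aa add1n => -[].
have sBA : B \subset A by apply: subsetDl.
have abB : abelian <<B>> by apply: abelianS abA; apply: genS.
have IHB := IH B cB abB (fun b Bb => oA b (subsetP sBA b Bb)).
have eA : A = [set a] :|: B by rewrite setD1K.
have cab : <[a]> \subset 'C(<<B>>).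
  apply: subset_trans (centS (genS sBA)).
  apply: (subset_trans _ abA); rewrite cycle_subG mem_gen //.
have sAM : <<A>> \subset <[a]> * <<B>>.
  rewrite -cent_joinEl // gen_subG eA subUset sub1set.
  rewrite (subsetP (joing_subl _ _)) ?cycle_id //=.
  exact: subset_trans (subset_gen B) (joing_subr _ _).
apply: (leq_trans (subset_leq_card sAM)).
have := mul_cardG <[a]>%G <<B>>%G => h.
rewrite expnS; apply: (@leq_trans (#|<[a]>| * #|<<B>>|)); last first.
  by apply: leq_mul => //; rewrite -orderE; apply: oA.
by rewrite h leq_pmulr ?cardG_gt0.
Qed.

Lemma idx2 (gT : finGroupType) (Y A B : {group gT}) :
  #|Y : Y :&: (A :&: B)| <= #|Y : A| * #|Y : Y :&: B|.
Proof.
have e : Y :&: (A :&: B) = (Y :&: B) :&: A.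
  by rewrite setIC -setIA setIC (setIC B).
rewrite e -(Lagrange_index (subsetIl Y B) (subsetIl (Y :&: B) A)) /=.
rewrite mulnC leq_mul2r; apply/orP; right.
by rewrite indexgI; apply: (@idx_restr _ [group of Y :&: B] Y A); rewrite subsetIl.
Qed.

Lemma bigcap_index (gT : finGroupType) (Y C : {group gT}) :
  forall n (R : {set gT}), #|R| = n -> R \subset Y ->
  #|Y : Y :&: \bigcap_(r in R) C :^ r| <= #|Y : C| ^ n.
Proof.
elim=> [|n IH] R cR sRY.
  move/eqP: cR; rewrite cards_eq0 => /eqP ->.
  by rewrite big_set0 setIT indexgg.
have [r Rr] : exists r, r \in R by apply/set0Pn; rewrite -cards_eq0 cR.
have cR' : #|R :\ r| = n by move: cR; rewrite (cardsD1 r) Rr add1n => -[].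
have IHR := IH (R :\ r) cR' (subset_trans (subsetDl _ _) sRY).
rewrite (big_setD1 r Rr) /=.
apply: leq_trans (idx2 Y (C :^ r)%G [group of \bigcap_(r0 in R :\ r) C :^ r0]) _.
rewrite expnS leq_mul //.
by rewrite -(indexJg Y C r) conjGid ?(subsetP sRY).
Qed.

Lemma core_index (gT : finGroupType) (Y C : {group gT}) :
  C \subset Y -> #|Y : gcore C Y| <= #|Y : C| ^ #|Y : C|.
Proof.
move=> sCY.
set N := 'N_Y(C).
pose R := [set repr B | B in rcosets N Y].
have sNY : N \subset Y := subsetIl _ _.
have sRY : R \subset Y.
  apply/subsetP=> _ /imsetP[B /rcosetsP[y Yy ->] ->].
  have := mem_repr_rcoset N y; rewrite mem_rcoset => h.
  by rewrite -(mulgKV y (repr (N :* y))) groupM // (subsetP sNY).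
have cRN : #|R| <= #|Y : N| by apply: leq_imset_card.
have sCN : C \subset N by rewrite subsetI sCY normG.
have cNC : #|Y : N| <= #|Y : C|.
  by apply: dvdn_leq; [apply: indexg_gt0 | apply: indexgS].
have sD : Y :&: \bigcap_(r in R) C :^ r \subset gcore C Y.
  apply/bigcapsP=> y Yy; apply/subsetP=> x /setIP[_ /bigcapP hx].
  have Rr : repr (N :* y) \in R by apply: imset_f; apply/rcosetsP; exists y.
  have := mem_repr_rcoset N y; rewrite mem_rcoset => hn.
  have e : C :^ repr (N :* y) = C :^ y.
    rewrite -(mulgKV y (repr (N :* y))) conjsgM.
    by case/setIP: hn => _ /normP ->.
  by rewrite -e; apply: hx.
have h1 : #|Y : gcore C Y| <= #|Y : Y :&: \bigcap_(r in R) C :^ r|.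
  apply: dvdn_leq; first exact: indexg_gt0.
  exact: (indexgS Y sD).
apply: leq_trans h1 _.
apply: leq_trans (@bigcap_index _ Y C _ R (erefl _) sRY) _.
have M0 : 0 < #|Y : C| := indexg_gt0 _ _.
exact: leq_pexp2l M0 (leq_trans cRN cNC).
Qed.



Lemma comm_id (gT : finGroupType) (Q H : {group gT}) :
  solvable Q -> H \subset 'N(Q) -> coprime #|Q| #|H| ->
  [~: [~: Q, H], H] = [~: Q, H].
Proof.
move=> solQ nQH coQH.
set Y := [~: Q, H].
have sYQ : Y \subset Q by rewrite commg_subl.
have nYQ : Q \subset 'N(Y) by apply: commg_norml.
have nYH : H \subset 'N(Y) by apply: commg_normr.
have solY : solvable Y := solvableS sYQ solQ.
have coYH : coprime #|Y| #|H| := coprimeSg sYQ coQH.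
have e := coprime_norm_quotient_cent nQH nYH coYH solY.
have cQH : Q / Y \subset 'C(H / Y) by rewrite quotient_cents2.
rewrite (setIidPl cQH) in e.
set C := 'C_Q(H) in e.
have sQYC : Q \subset Y * C by rewrite -quotientSK // e.
have eQ : (Q : {set gT}) = Y * C.
  by apply/eqP; rewrite eqEsubset sQYC mul_subG // subsetIl.
have nRC : C \subset 'N([~: Y, H]).
  apply: normsR; first exact: subset_trans (subsetIl _ _) nYQ.
  by apply: cents_norm; rewrite subsetIr.
have cCH : [~: C, H] = 1 by apply/commG1P; rewrite subsetIr.
symmetry. rewrite {1}/Y eQ commMG // cCH mulg1 //.
Qed.



Lemma cent_sub_der (gT : finGroupType) (Y H : {group gT}) :
  solvable Y -> H \subset 'N(Y) -> coprime #|Y| #|H| -> [~: Y, H] = Y ->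
  'C_Y(H) \subset Y^`(1).
Proof.
move=> solY nYH coYH eY.
set D := Y^`(1).
have sDY : D \subset Y := der_sub 1 Y.
have nDH : H \subset 'N(D) := char_norm_trans (der_char 1 Y) nYH.
have nDY : Y \subset 'N(D) := der_norm 1 Y.
have abQ : abelian (Y / D) := sub_der1_abelian (subxx _).
have nQQ : H / D \subset 'N(Y / D) := morphim_norms _ nYH.
have coQ : coprime #|Y / D| #|H / D| := coprime_morph _ coYH.
have := coprime_abel_cent_TI nQQ coQ abQ.
rewrite -quotientR ?eY // -coprime_norm_quotient_cent //; last first.
  exact: solvableS sDY solY.
  exact: coprimeSg sDY coYH.
move/eqP; rewrite -subG1 quotient_sub1 //.
exact: subset_trans (subsetIl _ _) nDY.
Qed.

Lemma core_central (gT : finGroupType) (Y H C0 : {group gT}) :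
  [~: Y, H] = Y -> C0 <| Y -> C0 \subset 'C(H) -> C0 \subset 'C(Y).
Proof.
move=> eY nsC0 cC0H.
have h1 : [~: H, C0, Y] :=: 1.
  have -> : [~: H, C0] = 1 by apply/commG1P; rewrite centsC.
  exact: comm1G.
have h2 : [~: C0, Y, H] :=: 1.
  apply/commG1P; apply: subset_trans cC0H.
  by rewrite commg_subl; case/andP: nsC0.
have := three_subgroup h1 h2; rewrite eY => /commG1P.
by rewrite centsC.
Qed.



Lemma cocycle_gen (gT : finGroupType) (Y Z : {group gT}) :
  Z \subset Y -> Y \subset 'C(Z) -> Z \subset Y^`(1) ->
  exists A : {set gT},
    [/\ A \subset Z, Z \subset <<A>> & #|A| <= #|Y : Z| * #|Y : Z|].
Proof.
move=> sZY cYZ sZD.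
pose r y := repr (Z :* y).
pose T := [set repr B | B in rcosets Z Y].
have rZ y : r y \in Z :* y by apply: mem_repr_rcoset.
have rT y : y \in Y -> r y \in T.
  by move=> Yy; apply: imset_f; apply/rcosetsP; exists y.
have TY : T \subset Y.
  apply/subsetP=> _ /imsetP[B /rcosetsP[y Yy ->] ->].
  have := rZ y; rewrite mem_rcoset => h.
  suff: r y \in Y by [].
  by rewrite -(mulgKV y (r y)) groupM // (subsetP sZY).
have cardT : #|T| <= #|Y : Z| by apply: leq_imset_card.
pose A := [set t * s * (r (t * s))^-1 | t in T, s in T].
have cardA : #|A| <= #|T| * #|T|.
  by rewrite /A curry_imset2X (leq_trans (leq_imset_card _ _)) // cardsX.
have AZ : A \subset Z.
  apply/subsetP=> _ /imset2P[t s _ _ ->].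
  have := rZ (t * s); rewrite mem_rcoset => h.
  by rewrite -[X in X \in Z]invgK invMg invgK groupV.
exists A; split => //; last by apply: (leq_trans cardA); apply: leq_mul.
pose W := <<A>>.
have WZ : W \subset Z by rewrite gen_subG.
have cZY : Z \subset 'C(Y) by rewrite centsC.
pose r1 := r 1.
have r1Z : r1 \in Z by have := rZ 1; rewrite rcoset1.
have r1A : r1 \in A.
  have e : r (r1 * r1) = r1 by rewrite {1}/r (rcoset_id (groupM r1Z r1Z)) /r1 /r rcoset1.
  apply/imset2P; exists r1 r1; rewrite ?rT ?group1 // e mulgK //.
have r1W : r1 \in W by apply: mem_gen.
pose P := (W * T)%g.
have gP : group_set P.
  apply/group_setP; split.
    by rewrite -(mulVg r1) mem_mulg ?groupV ?rT.
  move=> _ _ /mulsgP[w1 t1 Ww1 Tt1 ->] /mulsgP[w2 t2 Ww2 Tt2 ->].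
  have Yt1 := subsetP TY t1 Tt1; have Yt2 := subsetP TY t2 Tt2.
  have Zw2 := subsetP WZ w2 Ww2.
  have ct : t1 * w2 = w2 * t1.
    by apply: (centP (subsetP cYZ _ Yt1)).
  have e : w1 * t1 * (w2 * t2) =
      (w1 * w2 * (t1 * t2 * (r (t1 * t2))^-1)) * r (t1 * t2).
    by rewrite !mulgA mulgKV -(mulgA w1 t1) ct !mulgA.
  rewrite e; apply: mem_mulg; last exact: rT (groupM Yt1 Yt2).
  rewrite groupM ?(groupM Ww1 Ww2) //.
  by apply: mem_gen; apply/imset2P; exists t1 t2.
pose Pg := Group gP.
have TP : T \subset Pg.
  by apply/subsetP=> t Tt; rewrite /= -(mul1g t) mem_mulg.
pose U := <<T>>.
have UY : U \subset Y by rewrite gen_subG.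
have YZU : Y \subset Z * U.
  apply/subsetP=> y Yy.
  have h : y \in Z :* r y by rewrite rcoset_repr rcoset_refl.
  rewrite mem_rcoset in h.
  by rewrite -(mulgKV (r y) y) mem_mulg // mem_gen // rT.
have nUY : Y \subset 'N(U).
  apply: subset_trans YZU _; rewrite mul_subG ?normG //.
  by apply: cents_norm; apply: subset_trans cZY (centS UY).
have abZ : abelian Z by apply: subset_trans sZY cYZ.
have abQ : abelian (Y / U).
  apply: abelianS (quotient_abelian U abZ).
  by rewrite -quotientMidr quotientS.
have sDU : Y^`(1) \subset U by apply: der1_min.
have YU : Y \subset U.
  by apply: subset_trans YZU _; rewrite mul_subG // (subset_trans sZD).
have YP : Y \subset Pg by apply: subset_trans YU _; rewrite gen_subG.
apply/subsetP=> z Zz.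
have := subsetP YP z (subsetP sZY z Zz); case/mulsgP=> w t Ww Tt ez.
have Zt : t \in Z by rewrite -(mulKg w t) -ez groupM ?groupV // (subsetP WZ).
have et : t = r1.
  move: Tt => /imsetP[B /rcosetsP[y Yy eB] et0].
  rewrite et0 eB /r1 /r rcoset1; congr repr.
  rewrite -(rcoset_repr Z y); apply: rcoset_id.
  by rewrite -eB -et0.
by rewrite ez et groupM.
Qed.



Lemma transfer_central (gT : finGroupType) (Y Z : {group gT}) (z : gT) :
  Z \subset Y -> Y \subset 'C(Z) -> z \in Z -> z \in Y^`(1) ->
  z ^+ #|Y : Z| = 1.
Proof.
move=> sZY cYZ Zz Dz.
have abZ : abelian (idm Z @* Z).
  by rewrite morphim_idm //; apply: subset_trans sZY cYZ.
have Yz : z \in Y := subsetP sZY z Zz.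
pose tr := transfer_morphism Y abZ.
have sDk : Y^`(1) \subset 'ker tr.
  rewrite derg1 gen_subG; apply/subsetP=> _ /imset2P[a b Ya Yb ->].
  apply/kerP; first by rewrite groupR.
  rewrite morphR //; apply/eqP/commgP.
  by rewrite /commute; apply: GRing.addrC.
have k : tr z = 1 by apply: mker; apply: (subsetP sDk).
have trX := transversalP (rcosets_cycle_partition sZY Yz).
have := transfer_cycle_expansion sZY abZ Yz trX.
have ZA : z \in idm Z @* Z by rewrite morphim_idm.
rewrite (eq_bigr (fun x => FiniteModule.fmod abZ z *+ #|<[z]> : Z :* x|)%R); last first.
  move=> x Xx.
  have Yx : x \in Y := subsetP (transversal_sub trX) x Xx.
  have e : z ^+ #|<[z]> : Z :* x| ^ x^-1 = z ^+ #|<[z]> : Z :* x|.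
    apply/conjg_fixP; apply/commgP.
    have Zzn : z ^+ #|<[z]> : Z :* x| \in Z by rewrite groupX.
    apply/commute_sym.
    exact: (centP (subsetP cYZ _ (groupVr Yx))).
  rewrite e /= /restrm /=.
  by rewrite /idm FiniteModule.fmodX.
rewrite GRing.sumrMnr (sum_index_rcosets_cycle sZY Yz trX) => e.
have : FiniteModule.fmod abZ (z ^+ #|Y : Z|) = 0%R.
  by rewrite FiniteModule.fmodX // -e; apply: k.
move/(congr1 (@FiniteModule.fmval _ _ abZ)).
by rewrite FiniteModule.fmodK ?groupX // => ->.
Qed.

Definition gbound (M : nat) : nat := let n := (M ^ M)%N in (n * n ^ (n * n))%N.

Lemma mono_pow (a b : nat) : 0 < a -> a <= b -> (a ^ a <= b ^ b)%N.
Proof.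
move=> a0 ab; apply: (@leq_trans (b ^ a)).
  by rewrite leq_exp2r.
by apply: leq_pexp2l => //; apply: leq_trans ab.
Qed.

Lemma mono_g (a b : nat) : 0 < a -> a <= b -> (a * a ^ (a * a) <= b * b ^ (b * b))%N.
Proof.
move=> a0 ab; apply: leq_mul => //; apply: (@leq_trans (b ^ (a * a))).
  by rewrite leq_exp2r ?muln_gt0 ?a0.
by apply: leq_pexp2l; [apply: leq_trans ab | apply: leq_mul].
Qed.

Lemma part2 (gT : finGroupType) (Y H : {group gT}) (M : nat) :
  solvable Y -> H \subset 'N(Y) -> coprime #|Y| #|H| -> [~: Y, H] = Y ->
  #|Y : 'C_Y(H)| <= M -> #|Y| <= gbound M.
Proof.
move=> solY nYH coYH eY cM.
set C := 'C_Y(H).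
have sCY : C \subset Y := subsetIl _ _.
pose C0 := [group of gcore C Y].
have nsC0 : C0 <| Y := gcore_normal sCY.
have sC0C : C0 \subset C := gcore_sub _ _.
have sC0Y : C0 \subset Y := subset_trans sC0C sCY.
have cC0H : C0 \subset 'C(H) := subset_trans sC0C (subsetIr _ _).
have cC0Y : C0 \subset 'C(Y) := core_central eY nsC0 cC0H.
have cYC0 : Y \subset 'C(C0) by rewrite centsC.
have sC0D : C0 \subset Y^`(1).
  exact: subset_trans sC0C (cent_sub_der solY nYH coYH eY).
have [A [AC0 C0A cardA]] := cocycle_gen sC0Y cYC0 sC0D.
set n := #|Y : C0| in cardA.
have n0 : 0 < n := indexg_gt0 _ _.
have abA : abelian <<A>>.
  apply: abelianS (subset_trans sC0Y cYC0).
  by rewrite gen_subG.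
have oA : forall a, a \in A -> #[a] <= n.
  move=> a Aa; have C0a := subsetP AC0 a Aa.
  have := transfer_central sC0Y cYC0 C0a (subsetP sC0D a C0a).
  by move/eqP; rewrite -order_dvdn => /(dvdn_leq n0).
have c1 := card_gen_abel (erefl #|A|) abA oA.
have c2 : (#|C0| <= n ^ (n * n))%N.
  apply: leq_trans (subset_leq_card C0A) (leq_trans c1 _).
  by apply: leq_pexp2l.
have eYc : #|Y| = (n * #|C0|)%N by rewrite mulnC Lagrange.
have nM : n <= (M ^ M)%N.
  apply: leq_trans (core_index sCY) _.
  apply: mono_pow => //; exact: indexg_gt0.
rewrite eYc /gbound; apply: leq_trans (mono_g n0 nM).
by rewrite leq_mul2l c2 orbT.
Qed.

Section NatPart1.


Lemma card_setI_sum (gT : finGroupType) (B P : {set gT}) :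
  #|B :&: P| = (\sum_(x in B) (x \in P))%N.
Proof.
rewrite -sum1_card big_mkcond [RHS]big_mkcond /=.
apply: eq_bigr => x _; rewrite inE.
by case: (x \in B); case: (x \in P).
Qed.

Lemma double_count (gT : finGroupType) (F H : {set gT}) :
  (\sum_(v in F) #|H :&: 'C[v]| = \sum_(x in H) #|F :&: 'C[x]|)%N.
Proof.
under eq_bigr do rewrite card_setI_sum.
rewrite exchange_big /=; apply: eq_bigr => x _.
by rewrite card_setI_sum; apply: eq_bigr => v _; rewrite cent1C.
Qed.

Local Open Scope nat_scope.

Lemma burnside_small (gT : finGroupType) (F H : {group gT}) (m : nat) :
  (forall x, x \in H -> #|F : 'C_F[x]| <= m) -> 2 * m <= #|F| ->
  exists2 v, v \in F & (v != 1%g) && (#|H| <= 2 * m * #|'C_H[v]|).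
Proof.
move=> hm hF.
case: (boolP [exists v in F, (v != 1%g) && (#|H| <= 2 * m * #|'C_H[v]|)]).
  by case/exists_inP=> v Fv hv; exists v.
rewrite negb_exists_in => /forall_inP hv; exfalso.
have H0 : 0 < #|H| := cardG_gt0 H.
have e := double_count F H.
have r1 : 2 * #|F| * #|H| <= 2 * m * \sum_(x in H) #|F :&: 'C[x]|.
  rewrite big_distrr /= -[2 * #|F| * #|H|]mulnC -sum_nat_const.
  apply: leq_sum => x Hx.
  have := Lagrange (subsetIl F 'C[x]); rewrite -/('C_F[x]) => eL.
  have hx := hm x Hx.
  rewrite -mulnA leq_mul2l /=.
  rewrite -[in X in X <= _]eL mulnC leq_mul2r hx orbT.
  done.
have r2 : 2 * m * \sum_(v in F) #|H :&: 'C[v]| <= 2 * m * #|H| + (#|F| - 1) * #|H|.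
  rewrite big_distrr (bigD1 1%g) //= cent11T setIT.
  rewrite leq_add2l.
  apply: (@leq_trans (\sum_(i in F | i != 1%g) #|H|)).
    apply: leq_sum => v /andP[Fv nv1].
    have := hv v Fv; rewrite nv1 /= -ltnNge => /ltnW.
    by [].
  rewrite sum_nat_const.
  have -> : #|[pred i in F | i != 1%g]| = #|F| - 1.
    have F1 : (1%g \in F) = true by apply: group1.
    rewrite (cardD1 1%g F) F1 add1n subSS subn0.
    by apply: eq_card => i; rewrite !inE andbC.
  by [].
rewrite -e in r1.
have r3 := leq_trans r1 r2.
have : 2 * #|F| <= 2 * m + (#|F| - 1).
  by rewrite -(leq_pmul2r H0) mulnDl.
have F0 : 0 < #|F| := cardG_gt0 F.
lia.
Qed.

End NatPart1.

Section NatPart2.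

Local Open Scope nat_scope.

Lemma pow_facts (m : nat) : 0 < m -> 2 * m <= 2 ^ (2 * m ^ 2) /\ m ^ (2 * m) <= 2 ^ (2 * m ^ 2).
Proof.
move=> m0.
have hm : m < 2 ^ m := ltn_expl m (isT : 1 < 2).
have e : 2 ^ (2 * m ^ 2) = (2 ^ m) ^ (2 * m) by rewrite -expnM; congr (_ ^ _); lia.
split.
  have h2 : 2 <= 2 ^ m by rewrite -{1}(expn1 2) leq_pexp2l.
  apply: (@leq_trans (2 ^ m * 2 ^ m)); first by rewrite mulnC leq_mul // ltnW.
  rewrite -expnD leq_pexp2l //; nia.
by rewrite e leq_exp2r ?muln_gt0 // ltnW.
Qed.

Lemma factorL (gT : finGroupType) (Y H F : {group gT}) (m : nat) :
  Y \subset 'C(F) -> minnormal F (Y <*> H) -> is_abelem F -> H \subset 'N(F) ->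
  (forall x, x \in H -> #|F : 'C_F[x]| <= m) ->
  #|F : 'C_F(H)| ^ #|H| <= (\prod_(x in H) #|F : 'C_F[x]|) ^ (4 * m ^ 2).
Proof.
move=> cYF minF abF nFH hm.
have pos : 0 < \prod_(x in H) #|F : 'C_F[x]|.
  by apply: prodn_gt0 => x; apply: indexg_gt0.
case cHF: (H \subset 'C(F)).
  have -> : 'C_F(H) = F by apply/setIidPl; rewrite centsC.
  by rewrite indexgg exp1n expn_gt0 pos.
move/negbT: cHF => ncHF.
case/mingroupP: minF => /andP[ntF nFX] minF.
have C1 : 'C_F(H) = 1%g.
  apply/eqP/idPn => ntC.
  have nCX : Y <*> H \subset 'N('C_F(H)).
    rewrite join_subG; apply/andP; split.
      by apply: cents_norm; apply: subset_trans cYF (centS (subsetIl _ _)).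
    by rewrite normsI ?norms_cent ?normG.
  have := minF [group of 'C_F(H)]; rewrite /= ntC nCX => /(_ isT (subsetIl _ _)) eC.
  by move: ncHF; rewrite centsC -eC subsetIr.
rewrite C1 indexg1.
set p := pdiv #|F|.
have pabF : p.-abelem F := abF.
have [x0 Hx0 nx0] := subsetPn ncHF.
have i0gt1 : 1 < #|F : 'C_F[x0]|.
  by rewrite indexg_gt1 subsetI subxx sub_cent1.
have pnat0 : p.-nat #|F : 'C_F[x0]|.
  exact: pnat_dvd (dvdn_indexg _ _) (abelem_pgroup pabF).
have ep : pdiv #|F : 'C_F[x0]| = p.
  have hp : pdiv #|F : 'C_F[x0]| \in \pi(#|F : 'C_F[x0]|) by rewrite pi_pdiv.
  by have := pnatPpi pnat0 hp; rewrite inE => /eqP.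
have p_le : p <= m.
  rewrite -ep; apply: leq_trans (hm _ Hx0); apply: pdiv_leq; lia.
have m0 : 0 < m by apply: leq_trans (hm _ Hx0); apply: indexg_gt0.
have [pf1 pf2] := pow_facts m0.
have Fb : #|F| <= 2 ^ (2 * m ^ 2).
  case: (ltnP #|F| (2 * m)) => [lt|ge]; first by apply: leq_trans (ltnW lt) pf1.
  have [v Fv /andP[nv1 hv]] := burnside_small hm ge.
  set W := <<v ^: H>>.
  have sWF : W \subset F by rewrite gen_subG class_sub_norm.
  have ntW : W != 1%g.
    apply/trivgPn; exists v => //.
    by apply: mem_gen; apply: class_refl.
  have nWX : Y <*> H \subset 'N(W).
    rewrite join_subG; apply/andP; split.
      by apply: cents_norm; apply: subset_trans cYF (centS sWF).
    by apply: norms_gen; apply: class_norm.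
  have eW : W = F.
    have := minF [group of W]; rewrite /= ntW nWX => /(_ isT sWF).
    by move=> ->.
  have p0 : 0 < p by apply: prime_gt0; apply: pdiv_prime; rewrite cardG_gt1.
  have sAF : v ^: H \subset F by rewrite class_sub_norm.
  have oA : forall a, a \in v ^: H -> #[a] <= p.
    move=> a Aa; have Fa : a \in F := subsetP sAF a Aa.
    case: (eqVneq a 1%g) => [->|na1]; first by rewrite order1.
    by rewrite (abelem_order_p pabF Fa na1).
  have abW : abelian W := abelianS sWF (abelem_abelian pabF).
  have cW := card_gen_abel (erefl #|v ^: H|) abW oA.
  have cls : #|v ^: H| <= 2 * m.
    rewrite -index_cent1.
    have eL := Lagrange (subsetIl H 'C[v]).
    have c0 : 0 < #|'C_H[v]| := cardG_gt0 [group of 'C_H[v]].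
    rewrite -(leq_pmul2l c0) eL mulnC; exact: hv.
  rewrite -eW; apply: leq_trans cW _; apply: leq_trans (leq_pexp2l p0 cls) _.
  by apply: leq_trans pf2; rewrite leq_exp2r // muln_gt0.
set S := H :\: 'C(F).
have eS : #|'C_H(F)| + #|S| = #|H| by rewrite cardsID.
have Kh : 2 * #|'C_H(F)| <= #|H|.
  have eL := Lagrange (subsetIl H 'C(F)).
  have i2 : 1 < #|H : 'C_H(F)| by rewrite indexg_gt1 subsetI subxx.
  by rewrite -eL mulnC leq_mul2l i2 orbT.
have hS : #|H| <= 2 * #|S| by lia.
have prodS : 2 ^ #|S| <= \prod_(x in H) #|F : 'C_F[x]|.
  rewrite (bigID (fun x => x \in 'C(F))) /=.
  apply: (@leq_trans (\prod_(x in H | x \notin 'C(F)) #|F : 'C_F[x]|)); last first.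
    by rewrite leq_pmull // prodn_gt0 // => x; apply: indexg_gt0.
  apply: (@leq_trans (\prod_(x in H | x \notin 'C(F)) 2)).
    rewrite (eq_bigl (fun x => x \in S)) => [|x]; last by rewrite !inE andbC.
    by rewrite prod_nat_const.
  apply: leq_prod => x /andP[Hx nx].
  by rewrite indexg_gt1 subsetI subxx sub_cent1.
have H0 : 0 < #|H| := cardG_gt0 H.
apply: (@leq_trans ((2 ^ (2 * m ^ 2)) ^ #|H|)); first by rewrite leq_exp2r.
apply: (@leq_trans ((2 ^ #|S|) ^ (4 * m ^ 2))); last first.
  by rewrite leq_exp2r // muln_gt0 expn_gt0 m0.
rewrite -!expnM leq_pexp2l //.
set mm := m ^ 2; nia.
Qed.

End NatPart2.

Section NatPart3.
Local Open Scope nat_scope.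

Local Open Scope nat_scope.

Lemma idx_quo (gT : finGroupType) (Y F A : {group gT}) :
  F \subset Y -> Y \subset 'N(F) -> A \subset 'N(Y) -> A \subset 'N(F) ->
  coprime #|F| #|A| -> solvable F ->
  #|Y : 'C_Y(A)| = #|F : 'C_F(A)| * #|Y / F : 'C_(Y / F)(A / F)|.
Proof.
move=> sFY nFY nYA nFA coFA solF.
rewrite -(coprime_norm_quotient_cent nYA nFA coFA solF).
set C := 'C_Y(A).
have sCY : C \subset Y := subsetIl _ _.
have eCF : C :&: F = 'C_F(A) by rewrite /C setIAC (setIidPr sFY).
have e1 : #|C| * #|Y : C| = #|Y| := Lagrange sCY.
have e2 : #|'C_F(A)| * #|F : 'C_F(A)| = #|F| := Lagrange (subsetIl F 'C(A)).
have e3 : #|Y / F| = #|Y : F| := card_quotient nFY.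
have e3' : #|F| * #|Y : F| = #|Y| := Lagrange sFY.
have nFC : C \subset 'N(F) := subset_trans sCY nFY.
have e4 : #|C / F| = #|C : F| := card_quotient nFC.
have e4' : #|C :&: F| * #|C : F| = #|C| := LagrangeI [group of C] F.
have e5 : #|C / F| * #|Y / F : C / F| = #|Y / F| := Lagrange (quotientS F sCY).
rewrite eCF in e4'.
have c0 : 0 < #|C| := cardG_gt0 [group of C].
rewrite e4 e3 in e5.
apply/eqP; rewrite -(eqn_pmul2l c0); apply/eqP.
rewrite e1 -e3' -e2 -e5 -[in RHS]e4'.
by rewrite !mulnA; congr (_ * _); rewrite mulnAC.
Qed.

Local Open Scope group_scope.

Lemma lemA (m : nat) : forall n (gT : finGroupType) (Y H : {group gT}),
  #|Y| <= n -> nilpotent Y -> H \subset 'N(Y) -> coprime #|Y| #|H| ->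
  (forall x, x \in H -> #|Y : 'C_Y[x]| <= m) ->
  (#|Y : 'C_Y(H)| ^ #|H| <= (\prod_(x in H) #|Y : 'C_Y[x]|) ^ (4 * m ^ 2))%N.
Proof.
elim=> [|n IH] gT Y H cY nilY nYH coYH hm.
  by have := cardG_gt0 Y; lia.
have pos : 0 < \prod_(x in H) #|Y : 'C_Y[x]|.
  by apply: prodn_gt0 => x; apply: indexg_gt0.
case: (eqVneq Y 1%G) => [Y1 | ntY].
  have -> : 'C_Y(H) = Y by apply/setIidPl; rewrite Y1 sub1G.
  by rewrite indexgg exp1n expn_gt0 pos.
set X := Y <*> H.
have nYX : X \subset 'N(Y) by rewrite join_subG normG nYH.
have gPY : (Y :!=: 1%g) && (X \subset 'N(Y)).
  by rewrite nYX andbT; apply/eqP => e; move/eqP: ntY; apply; apply: val_inj.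
have [F minF sFY] := @mingroup_exists _ (fun G : {group gT} => (G :!=: 1%g) && (X \subset 'N(G))) Y gPY.
have minF' : minnormal F X := minF.
have [nFX ntF abF] := minnormal_solvable minF' sFY (nilpotent_sol nilY).
have nFY : Y \subset 'N(F) by apply: subset_trans nFX; apply: joing_subl.
have nFH : H \subset 'N(F) by apply: subset_trans nFX; apply: joing_subr.
have nsFY : F <| Y by rewrite /normal sFY nFY.
have cYF : Y \subset 'C(F).
  have ntZ := meet_center_nil nilY nsFY ntF.
  case/mingroupP: minF => _ minF0.
  have nZX : X \subset 'N(F :&: 'Z(Y)).
    by rewrite normsI // (char_norm_trans (center_char Y)).
  have := minF0 [group of F :&: 'Z(Y)]; rewrite /= ntZ nZX => /(_ isT (subsetIl _ _)).
  move=> eZ; rewrite centsC -eZ /=; apply: subset_trans (subsetIr _ _) _.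
  exact: subsetIr.
have coFH : coprime #|F| #|H| := coprimeSg sFY coYH.
have solF : solvable F := abelian_sol (abelem_abelian abF).
have TI : Y :&: H = 1%g := coprime_TIg coYH.
have ex : forall x, x \in H ->
    #|Y : 'C_Y[x]| = (#|F : 'C_F[x]| * #|Y / F : 'C_(Y / F)[coset F x]|)%N.
  move=> x Hx.
  have nYx : <[x]> \subset 'N(Y) by rewrite cycle_subG (subsetP nYH).
  have nFx : <[x]> \subset 'N(F) by rewrite cycle_subG (subsetP nFH).
  have cox : coprime #|F| #|<[x]>| by apply: coprimegS coFH; rewrite cycle_subG.
  have := idx_quo sFY nFY nYx nFx cox solF.
  by rewrite quotient_cycle ?(subsetP nFH) // !cent_cycle.
have eH := idx_quo sFY nFY nYH nFH coFH solF.
have hmF : forall x, x \in H -> #|F : 'C_F[x]| <= m.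
  move=> x Hx; have := hm x Hx; rewrite (ex x Hx) => h.
  by apply: leq_trans h; apply: leq_pmulr; apply: indexg_gt0.
have FL := factorL cYF minF' abF nFH hmF.
have hq : #|Y / F| < #|Y| := ltn_quotient ntF sFY.
have cY' : #|Y / F| <= n.
  by move: (leq_trans hq cY); rewrite ltnS.
have nYH' : H / F \subset 'N(Y / F) := morphim_norms _ nYH.
have co' : coprime #|Y / F| #|H / F| := coprime_morph _ coYH.
have hm' : forall xb, xb \in H / F -> #|Y / F : 'C_(Y / F)[xb]| <= m.
  move=> xb /morphimP[x Nx Hx ->].
  have := hm x Hx; rewrite (ex x Hx) => h.
  by apply: leq_trans h; apply: leq_pmull; apply: indexg_gt0.
have IHr := IH _ (Y / F)%G (H / F)%G cY' (quotient_nil F nilY) nYH' co' hm'.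
have injH : {in H &, injective (coset F)}.
  move=> x y Hx Hy /rcoset_kercosetP.
  move/(_ (subsetP nFH x Hx) (subsetP nFH y Hy)).
  rewrite mem_rcoset => Fxy.
  have : x * y^-1 \in Y :&: H by rewrite inE (subsetP sFY) // groupM ?groupV.
  by rewrite TI => /set1P /eqP; rewrite mulg_eq1 ?invgK => /eqP.
have eQH : (H / F)%g = [set coset F x | x in H] by rewrite quotientE morphimEsub.
have cHF : #|H / F| = #|H| by rewrite eQH card_in_imset.
rewrite /= eQH big_imset //= (card_in_imset injH) -eQH in IHr.
rewrite eH expnMn.
rewrite (eq_bigr _ ex) big_split /= expnMn.
exact: leq_mul FL IHr.
Qed.

End NatPart3.

Theorem lemma2p6 :
  exists f : nat -> nat,
    forall (m : nat) (gT : finGroupType) (G Q H : {group gT}),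
      0 < m ->
      Q <| G -> H \subset G -> Q * H = G ->
      nilpotent Q ->
      coprime #|Q| #|H| ->
      (forall x, x \in H -> #|Q : 'C_Q[x]| <= m) ->
      #|[~: Q, H]| <= f m.
Proof.
exists (fun m => gbound (m ^ (4 * m ^ 2))%N).
move=> m gT G Q H m0 nsQG sHG eQH nilQ coQH hm.
have nQH : H \subset 'N(Q) := subset_trans sHG (normal_norm nsQG).
set Y := [~: Q, H].
have sYQ : Y \subset Q by rewrite commg_subl.
have nilY : nilpotent Y := nilpotentS sYQ nilQ.
have nYH : H \subset 'N(Y) := commg_normr _ _.
have coYH : coprime #|Y| #|H| := coprimeSg sYQ coQH.
have eY : [~: Y, H] = Y := comm_id (nilpotent_sol nilQ) nQH coQH.
have hmY : forall x, x \in H -> #|Y : 'C_Y[x]| <= m.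
  move=> x Hx; apply: leq_trans (hm x Hx).
  rewrite /= !indexgI.
  exact: (@idx_restr _ [group of Y] Q 'C[x]%G sYQ).
have LA := @lemA m #|Y| gT [group of Y] H (leqnn _) nilY nYH coYH hmY.
have pr : (\prod_(x in H) #|Y : 'C_Y[x]| <= m ^ #|H|)%N.
  by rewrite -prod_nat_const; apply: leq_prod => x Hx; apply: hmY.
have H0 : 0 < #|H| := cardG_gt0 H.
have cb : #|Y : 'C_Y(H)| <= (m ^ (4 * m ^ 2))%N.
  have e0 : 0 < (4 * m ^ 2)%N by rewrite muln_gt0 expn_gt0 m0.
  have LA' := leq_trans LA (eq_leq (erefl _)).
  have LB : (#|Y : 'C_Y(H)| ^ #|H| <= (m ^ #|H|) ^ (4 * m ^ 2))%N.
    by apply: leq_trans LA' _; rewrite leq_exp2r.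
  by rewrite -expnM mulnC expnM leq_exp2r in LB.
exact: part2 (nilpotent_sol nilY) nYH coYH eY cb.
Qed.
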